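(* Let $\mathcal H$ be a family of graphs. The following are equivalent: (i) there is a constant $c=c(\mathcal H)$ such that every connected $\mathcal H$-free graph $G$ has fewer than $c$ vertices $v$ with $\alpha(G[N(v)])\ge 2$; (ii) there is a positive integer $n$ such that $\mathcal H\le \{K_n^*,\ P_n,\ K_{1,n}^*,\ K_{2,n},\ E_2+K_n,\ K_1+nP_3,\ CK_n\}$.
   Context: All graphs are finite, simple, undirected. For graphs $H_1,H_2$, write $H_1\prec H_2$ if $H_2$ contains an induced subgraph isomorphic to $H_1$. A graph $G$ is $\mathcal H$-free if no $H\in\mathcal H$ satisfies $H\prec G$. For families $\mathcal H_1,\mathcal H_2$, write $\mathcal H_1\le\mathcal H_2$ if for every $H_2\in\mathcal H_2$ there is $H_1\in\mathcal H_1$ with $H_1\prec H_2$. $N(v)$ is the neighborhood of $v$, $G[S]$ the induced subgraph, $\alpha$ the independence number (the local independence number of $v$ is $\alpha(G[N(v)])$). $K_n$, $E_n$, $P_n$ are the complete graph, edgeless graph, and path on $n$ vertices; $K_{s,t}$ is the complete bipartite graph; $nG$ is the disjoint union of $n$ copies of $G$; $G_1+G_2$ is the join (disjoint union plus all edges between $V(G_1)$ and $V(G_2)$). $K_{1,n}^*$ is obtained from the star $K_{1,n}$ by attaching a new pendant vertex to each leaf; $K_n^*$ is obtained from $K_n$ by attaching a new pendant vertex to each vertex; $CK_n$ is obtained from two disjoint copies of $K_n$ by adding a perfect matching between them. *)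

(* Defs.v *)
From mathcomp Require Import all_boot.
Set Implicit Arguments. Unset Strict Implicit. Unset Printing Implicit Defensive.

Record graph := Graph {
  V : finType;
  adj : rel V;
  adj_sym : symmetric adj;
  adj_irr : irreflexive adj }.

Definition sadj (T : finType) (r : rel T) : rel T :=
  fun x y => (x != y) && (r x y || r y x).
Lemma sadj_sym (T : finType) (r : rel T) : symmetric (sadj r).
Proof. by move=> x y; rewrite /sadj eq_sym orbC. Qed.
Lemma sadj_irr (T : finType) (r : rel T) : irreflexive (sadj r).
Proof. by move=> x; rewrite /sadj eqxx. Qed.
Definition sgraph (T : finType) (r : rel T) : graph :=
  @Graph T (sadj r) (@sadj_sym T r) (@sadj_irr T r).

Definition induced_sub (H1 H2 : graph) : Prop :=
  exists f : V H1 -> V H2, injective f /\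
    forall x y, adj x y = adj (f x) (f y).

Definition Hfree (HH : graph -> Prop) (G : graph) : Prop :=
  forall H, HH H -> ~ induced_sub H G.

Definition family_le (HH1 HH2 : graph -> Prop) : Prop :=
  forall H2, HH2 H2 -> exists2 H1, HH1 H1 & induced_sub H1 H2.

Definition connected (G : graph) : Prop :=
  forall x y : V G, connect (@adj G) x y.

Definition nbhd (G : graph) (v : V G) : {set V G} := [set u | adj v u].

Definition independent (G : graph) (A : {set V G}) : bool :=
  [forall x in A, forall y in A, ~~ adj x y].
Definition alpha_in (G : graph) (S : {set V G}) : nat :=
  \max_(A : {set V G} | (A \subset S) && independent A) #|A|.
Definition local_alpha (G : graph) (v : V G) : nat := alpha_in (nbhd v).

(* K_n^* : clique vertices (i,true), pendant (i,false) attached to (i,true) *)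
Definition Kstar (n : nat) : graph :=
  @sgraph ('I_n * bool)%type
    (fun x y => (x.2 && y.2 && (x.1 != y.1)) || ((x.2 != y.2) && (x.1 == y.1))).
Definition Path (n : nat) : graph :=
  @sgraph 'I_n (fun i j => (i.+1 == j :> nat)).
(* K_{1,n}^* : None = centre, Some (i,true) leaves, Some (i,false) pendants *)
Definition K1nstar (n : nat) : graph :=
  @sgraph (option ('I_n * bool))%type
    (fun x y => match x, y with
                | None, Some (_, true) => true
                | Some (i, true), Some (j, false) => i == j
                | _, _ => false end).
Definition K2n (n : nat) : graph :=
  @sgraph (bool + 'I_n)%type
    (fun x y => match x, y with inl _, inr _ => true | _, _ => false end).
Definition E2joinKn (n : nat) : graph :=
  @sgraph (bool + 'I_n)%type
    (fun x y => match x, y with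
                | inl _, inl _ => false
                | inr i, inr j => i != j
                | _, _ => true end).
Definition K1joinnP3 (n : nat) : graph :=
  @sgraph (option ('I_n * 'I_3))%type
    (fun x y => match x, y with
                | None, Some _ => true
                | Some (i, a), Some (j, b) => (i == j) && (a.+1 == b :> nat)
                | _, _ => false end).
(* CK_n : two copies of K_n joined by a perfect matching *)
Definition CK (n : nat) : graph :=
  @sgraph ('I_n * bool)%type
    (fun x y => ((x.2 == y.2) && (x.1 != y.1)) || ((x.2 != y.2) && (x.1 == y.1))).

Definition special_family (n : nat) : graph -> Prop :=
  fun H => H = Kstar n \/ H = Path n \/ H = K1nstar n \/ H = K2n n \/
           H = E2joinKn n \/ H = K1joinnP3 n \/ H = CK n.

(* Main.v *)
Require Import Defs.
From mathcomp Require Import all_boot zify.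
From Stdlib Require Import Classical.
Set Implicit Arguments. Unset Strict Implicit. Unset Printing Implicit Defensive.


Definition homog (T : finType) (c : T -> T -> bool) (b : bool) (X : {set T}) :=
  {in X &, forall x y, x != y -> c x y = b}.

Lemma ramsey (s t : nat) (T : finType) (A : {set T}) (c : T -> T -> bool) :
  (forall x y, c x y = c y x) -> 2 ^ (s + t) <= #|A| ->
  (exists X : {set T}, [/\ X \subset A, s <= #|X| & homog c true X]) \/
  (exists X : {set T}, [/\ X \subset A, t <= #|X| & homog c false X]).
Proof.
move=> csym; move: {2}(s + t) (leqnn (s + t)) => k.
elim: k s t A => [|k IH] s t A hk hA.
  have -> : s = 0 by lia.
  by left; exists set0; split=> //; [exact: sub0set | move=> x y; rewrite inE].
case: s hk hA => [|s] hk hA.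
  by left; exists set0; split=> //; [exact: sub0set | move=> x y; rewrite inE].
case: t hk hA => [|t] hk hA.
  by right; exists set0; split=> //; [exact: sub0set | move=> x y; rewrite inE].
have : 0 < #|A| by apply: leq_trans hA; rewrite expn_gt0.
case/card_gt0P => v vA.
set P := [set x in A | (x != v) && c v x].
set Q := [set x in A | (x != v) && ~~ c v x].
have hPQ : #|A| <= #|P| + #|Q| + 1.
  have : A \subset v |: (P :|: Q).
    apply/subsetP => x xA; rewrite !inE xA /=.
    by case: eqP => //= _; case: (c v x).
  move/subset_leq_card; rewrite cardsU1 cardsU => h.
  apply: (leq_trans h); case: (v \in _) => /=; lia.
have e2 : 2 ^ (s.+1 + t.+1) = 2 * 2 ^ (s + t.+1) by rewrite addSn expnS.
have e3 : 2 ^ (s + t.+1) = 2 ^ (s.+1 + t) by rewrite addnS addSn.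
have [hP|hQ] : 2 ^ (s + t.+1) <= #|P| \/ 2 ^ (s.+1 + t) <= #|Q| by lia.
- have PA : P \subset A by apply/subsetP => x; rewrite inE => /andP[].
  case: (IH s t.+1 P _ hP) => [|[X [XP hX hom]] | [X [XP hX hom]]]; first by lia.
  + left; exists (v |: X); split.
    * by rewrite subUset sub1set vA (subset_trans XP PA).
    * have vX : v \notin X.
        by apply/negP => /(subsetP XP); rewrite inE eqxx andbF.
      by rewrite cardsU1 vX.
    * move=> x y; rewrite !inE => /orP[/eqP->|xX] /orP[/eqP->|yX]; rewrite ?eqxx //.
      -- by move=> _; move/(subsetP XP): yX; rewrite inE => /and3P[].
      -- by move=> _; rewrite csym; move/(subsetP XP): xX; rewrite inE => /and3P[].
      -- exact: hom.
  + by right; exists X; split=> //; exact: subset_trans XP PA.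
- have QA : Q \subset A by apply/subsetP => x; rewrite inE => /andP[].
  case: (IH s.+1 t Q _ hQ) => [|[X [XP hX hom]] | [X [XP hX hom]]]; first by lia.
  + by left; exists X; split=> //; exact: subset_trans XP QA.
  + right; exists (v |: X); split.
    * by rewrite subUset sub1set vA (subset_trans XP QA).
    * have vX : v \notin X.
        by apply/negP => /(subsetP XP); rewrite inE eqxx andbF.
      by rewrite cardsU1 vX.
    * move=> x y; rewrite !inE => /orP[/eqP->|xX] /orP[/eqP->|yX]; rewrite ?eqxx //.
      -- by move=> _; move/(subsetP XP): yX; rewrite inE => /and3P[_ _ /negbTE].
      -- by move=> _; rewrite csym; move/(subsetP XP): xX; rewrite inE => /and3P[_ _ /negbTE].
      -- exact: hom.
Qed.

Lemma ramseyN (s t : nat) : exists N, forall (T : finType) (A : {set T}) (c : T -> T -> bool),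
  (forall x y, c x y = c y x) -> N <= #|A| ->
  (exists X : {set T}, [/\ X \subset A, s <= #|X| & homog c true X]) \/
  (exists X : {set T}, [/\ X \subset A, t <= #|X| & homog c false X]).
Proof. by exists (2 ^ (s + t)) => T A c; apply: ramsey. Qed.

Lemma enum_inj (T : finType) (X : {set T}) n : n <= #|X| ->
  exists f : 'I_n -> T, injective f /\ forall i, f i \in X.
Proof.
move=> h; exists (fun i => enum_val (widen_ord h i)); split.
  by move=> i j /enum_val_inj /(congr1 val) /= /val_inj.
by move=> i; exact: enum_valP.
Qed.


Lemma card_bigcup_leq (I T' : finType) (X : {set I}) (F : I -> {set T'}) :
  #|\bigcup_(i in X) F i| <= \sum_(i in X) #|F i|.
Proof.
rewrite -!big_enum /=; elim: (enum X) => [|x s IH]; rewrite ?big_nil ?cards0 // !big_cons.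
apply: leq_trans (leq_card_setU _ _).1 _; by rewrite leq_add2l.
Qed.

Section G.
Variable G : graph.
Local Notation T := (V G).
Local Notation adj := (@adj G).

Lemma adjC (x y : T) : adj x y = adj y x. Proof. exact: adj_sym. Qed.
Lemma adjxx (x : T) : adj x x = false. Proof. exact: adj_irr. Qed.
Lemma adj_neq (x y : T) : adj x y -> x != y.
Proof. by apply: contraTneq => ->; rewrite adjxx. Qed.

Lemma emb (T' : finType) (r : rel T') (f : T' -> T) : injective f ->
  (forall x y, x != y -> adj (f x) (f y) = r x y || r y x) -> induced_sub (sgraph r) G.
Proof.
move=> fi h; exists f; split=> // x y /=; rewrite /sadj.
by case: eqVneq => [->|ne] /=; [rewrite adjxx | rewrite h].
Qed.

Definition rS (S : {set T}) : rel T := fun a b => [&& a \in S, b \in S & adj a b].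
Definition connS (S : {set T}) := {in S &, forall x y, connect (rS S) x y}.
Definition B (S : {set T}) : {set T} :=
  [set v in S | [exists x in S, exists y in S, [&& adj v x, adj v y, x != y & ~~ adj x y]]].

Lemma BP (S : {set T}) v : reflect (v \in S /\ exists x y, [/\ x \in S, y \in S, adj v x, adj v y & (x != y) && ~~ adj x y])
  (v \in B S).
Proof.
rewrite inE; apply: (iffP andP) => [[vS /existsP[x /andP[xS /existsP[y /andP[yS /and4P[a b c d]]]]]]|[vS [x [y [xS yS a b /andP[c d]]]]]].
  by split=> //; exists x, y; split=> //; rewrite c d.
split=> //; apply/existsP; exists x; rewrite xS; apply/existsP; exists y; by rewrite yS a b c d.
Qed.

Lemma BS (S : {set T}) : B S \subset S. Proof. by apply/subsetP => v /BP[]. Qed.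

Section Dist.
Variables (S : {set T}) (u : T).
Fixpoint Dl j := if j is j'.+1 then Dl j' :|: [set w in S | [exists x in Dl j', adj x w]] else [set u].

Lemma Dl_mono i j : i <= j -> Dl i \subset Dl j.
Proof.
move=> /subnK <-; elim: (j - i) => [|k IH] //=.
exact: subset_trans IH (subsetUl _ _).
Qed.

Lemma Dl_S j : u \in S -> Dl j \subset S.
Proof.
move=> uS; elim: j => [|j IH] /=; first by rewrite sub1set.
by rewrite subUset IH; apply/subsetP => w; rewrite inE => /andP[].
Qed.

Lemma Dl_step i x y : x \in Dl i -> y \in S -> adj x y -> y \in Dl i.+1.
Proof. move=> xD yS a /=; rewrite !inE yS; apply/orP; right; apply/existsP; exists x; by rewrite xD. Qed.

Lemma Dl_back j w : w \in Dl j.+1 -> w \notin Dl j -> exists2 x, x \in Dl j & adj x w.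
Proof. by rewrite /= !inE => /orP[->//|/andP[_ /existsP[x /andP[? ?]]]] _; exists x. Qed.

Lemma Dl_conn v : connect (rS S) u v -> exists j, v \in Dl j.
Proof.
case/connectP => p; have : u \in Dl 0 by rewrite inE.
move: 0 u => j0 x; elim: p j0 x => [|a p IH] j0 x xD /=; first by move=> _ ->; exists j0.
case/andP=> /and3P[_ aS xa] pp ev; apply: (IH j0.+1 a) => //; exact: Dl_step xD aS xa.
Qed.
Hypothesis uS : u \in S.

Lemma chain j w : w \in Dl j -> (forall i, i < j -> w \notin Dl i) ->
 exists g : nat -> T, [/\ g 0 = u, g j = w,
   forall i, i <= j -> g i \in Dl i /\ (forall i', i' < i -> g i \notin Dl i') &
   forall i, i < j -> adj (g i) (g i.+1)].
Proof.
elim: j w => [|j IH] w.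
  rewrite /= inE => /eqP -> _; exists (fun _ => u); split=> //.
  by move=> i; rewrite leqn0 => /eqP ->; split; rewrite ?inE.
move=> hw hmin; have wj : w \notin Dl j by apply: hmin.
have [x xD xw] := Dl_back hw wj.
have wS : w \in S by apply: (subsetP (Dl_S j.+1 uS)).
have xmin : forall i, i < j -> x \notin Dl i.
  move=> i ij; apply/negP => xi; have := Dl_step xi wS xw.
  by move/(subsetP (Dl_mono ij)); rewrite (negbTE wj).
have [g' [g0 gj gD ga]] := IH x xD xmin.
exists (fun i => if i == j.+1 then w else g' i); split.
- by rewrite g0.
- by rewrite eqxx.
- move=> i; case: eqVneq => [-> _|ne hi]; first by split.
  by apply: gD; rewrite -ltnS ltn_neqAle ne hi.
- move=> i hi; case: eqVneq => [e|ne]; first by move: hi; rewrite e ltnn.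
  case: eqVneq => [[e]|ne2]; first by rewrite e gj.
  by apply: ga; rewrite ltn_neqAle ne2 -ltnS hi.
Qed.

Section Chain.
Variables (j : nat) (g : nat -> T).
Hypothesis gD : forall i, i <= j -> g i \in Dl i /\ (forall i', i' < i -> g i \notin Dl i').
Hypothesis ga : forall i, i < j -> adj (g i) (g i.+1).

Lemma chain_inj a b : a < b -> b <= j -> g a != g b.
Proof.
move=> ab bj; have [ga' _] := gD (ltnW (leq_trans ab bj)).
have [_ gb] := gD bj; apply/eqP => e; by move: (gb a ab); rewrite -e ga'.
Qed.

Lemma chain_nonadj a b : a.+1 < b -> b <= j -> ~~ adj (g a) (g b).
Proof.
move=> ab bj; apply/negP => h.
have [ga' _] := gD (ltnW (leq_trans (ltnW ab) bj)).
have [gb gb'] := gD bj.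
have gbS : g b \in S by apply: (subsetP (Dl_S b uS)).
by move: (gb' _ ab); rewrite (Dl_step ga' gbS h).
Qed.

Lemma path_emb m : m <= j.+1 -> induced_sub (Path m) G.
Proof.
move=> mj; apply: (@emb _ _ (fun i : 'I_m => g i)).
  move=> i i' e; apply/val_inj/eqP; case: ltngtP => // h; exfalso.
  - by move/eqP: e; apply/negP/chain_inj => //; rewrite -ltnS (leq_trans _ mj).
  - by move/eqP: e; rewrite eq_sym; apply/negP/chain_inj => //; rewrite -ltnS (leq_trans _ mj).
move=> i i' ne; have hi : i <= j by rewrite -ltnS (leq_trans _ mj).
have hi' : i' <= j by rewrite -ltnS (leq_trans _ mj).
case: (eqVneq i.+1 i') => [e|n1].
  have ij : i < j by rewrite -e in hi'.
  by rewrite -e ga.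
case: (eqVneq i'.+1 i) => [e|n2].
  have ij : i' < j by rewrite -e in hi.
  by rewrite orbT -e adjC ga.
rewrite /=; apply/negbTE.
have : i != i' :> nat by [].
case: ltngtP => // h _.
- by apply: chain_nonadj => //; rewrite ltn_neqAle n1 h.
- by rewrite adjC; apply: chain_nonadj => //; rewrite ltn_neqAle n2 h.
Qed.
End Chain.
End Dist.

Section Bound.
Variable n : nat.
Hypothesis HP : ~ induced_sub (Path n) G.

Lemma B_bound (S : {set T}) D : connS S ->
  (forall x, x \in B S -> #|[set y in B S | adj x y]| <= D) -> #|B S| <= D.+1 ^ n.
Proof.
move=> cS hD; have [->|/card_gt0P[u uB]] := posnP #|B S|; first by [].
have uS : u \in S by move/BP: uB => [].
pose fix R j := if j is j'.+1 then R j' :|: [set w in B S | [exists x in R j', adj x w]] else [set u].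
have RB : forall j, R j \subset B S.
  elim=> [|j IH] /=; first by rewrite sub1set.
  by rewrite subUset IH; apply/subsetP => w; rewrite inE => /andP[].
have Rmono : forall i j, i <= j -> R i \subset R j.
  move=> i j /subnK <-; elim: (j - i) => [|k IH] //=.
  exact: subset_trans IH (subsetUl _ _).
have Rcard : forall j, #|R j| <= D.+1 ^ j.
  elim=> [|j IH] /=; first by rewrite cards1.
  apply: leq_trans (leq_card_setU _ _).1 _.
  have : #|[set w in B S | [exists x in R j, adj x w]]| <= #|R j| * D.
    rewrite -sum_nat_const.
    have h1 : #|[set w in B S | [exists x in R j, adj x w]]| <= #|\bigcup_(x in R j) [set y in B S | adj x y]|.
      apply: subset_leq_card; apply/subsetP => w; rewrite inE => /andP[wB /existsP[x /andP[xR xw]]].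
      by apply/bigcupP; exists x => //; rewrite inE wB.
    apply: leq_trans h1 _; apply: leq_trans (card_bigcup_leq _ _) _.
    apply: leq_sum => x xR; apply: hD; exact: (subsetP (RB j)).
  move=> h; rewrite expnS; apply: leq_trans (leq_add (leqnn _) h) _.
  have e : #|R j| + #|R j| * D = #|R j| * D.+1 by rewrite mulnS.
  by rewrite e mulnC leq_mul2l IH orbT.
suff : B S \subset R n by move/subset_leq_card/leq_trans; apply.
apply/subsetP => v vB; have vS : v \in S by move/BP: vB => [].
have [j0 vj0] := Dl_conn (cS u v uS vS).
have ex : exists j, v \in Dl S u j by exists j0.
case: (ex_minnP ex) => j vj jmin.
have hmin : forall i, i < j -> v \notin Dl S u i.
  by move=> i ij; apply/negP => vi; have := jmin i vi; rewrite leqNgt ij.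
have [g [g0 gj gD ga]] := chain uS vj hmin.
have jn : j < n.
  rewrite ltnNge; apply/negP => nj; apply: HP; apply: (path_emb uS gD ga); exact: leq_trans nj _.
have gB : forall i, i <= j -> g i \in B S.
  move=> i ij; case: (posnP i) => [->|i0]; first by rewrite g0.
  case: (eqVneq i j) => [->|ne]; first by rewrite gj.
  have ilt : i < j by rewrite ltn_neqAle ne ij.
  have gS : forall k, k <= j -> g k \in S by move=> k kj; have [h _] := gD k kj; exact: (subsetP (Dl_S k uS)).
  apply/BP; split; first exact: gS.
  exists (g i.-1), (g i.+1); split.
  - by apply: gS; lia.
  - exact: gS.
  - by rewrite adjC; have := ga i.-1; rewrite prednK //; apply; lia.
  - exact: ga.
  - apply/andP; split.
      by apply: (chain_inj gD); lia.
    by apply: (chain_nonadj uS gD) => //; lia.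
have gR : forall i, i <= j -> g i \in R i.
  elim=> [|i IH] ij; first by rewrite g0 inE.
  rewrite /= inE; apply/orP; right; rewrite inE gB //; apply/existsP; exists (g i).
  by rewrite IH ?ga // ltnW.
by rewrite -gj; apply: (subsetP (Rmono _ _ (ltnW jn))); apply: gR.
Qed.
End Bound.
End G.


Section Emb.
Variable G : graph.
Local Notation T := (V G).
Local Notation adj := (@adj G).
Variable n : nat.

Lemma neq_adj (x y : T) : adj x y -> x != y. Proof. exact: adj_neq. Qed.

Lemma E2Kn_emb (x y : T) (k : 'I_n -> T) : x != y -> ~~ adj x y -> injective k ->
  (forall i j, i != j -> adj (k i) (k j)) -> (forall i, adj (k i) x) -> (forall i, adj (k i) y) ->
  induced_sub (E2joinKn n) G.
Proof.
move=> xy nxy ki kk kx ky.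
apply: (@emb _ _ _ (fun z => match z with inl bb => if bb then x else y | inr i => k i end)).
  move=> [[]|i] [[]|j] //= e; try (by move: xy; rewrite e eqxx);
    try (by move: (kx j); rewrite -e adjxx); try (by move: (ky j); rewrite -e adjxx);
    try (by move: (kx i); rewrite e adjxx); try (by move: (ky i); rewrite e adjxx).
  by rewrite (ki _ _ e).
move=> [[]|i] [[]|j] //= ne; rewrite ?orbF ?orbT //; try (by apply/negbTE; rewrite adjC);
  try (by apply/negbTE); rewrite ?(adjC x) ?(adjC y) ?kx ?ky //.
have ij : i != j by apply: contraNneq ne => ->.
by rewrite kk // ij.
Qed.

Lemma K2n_emb (x y : T) (k : 'I_n -> T) : x != y -> ~~ adj x y -> injective k ->
  (forall i j, i != j -> ~~ adj (k i) (k j)) -> (forall i, adj (k i) x) -> (forall i, adj (k i) y) ->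
  induced_sub (K2n n) G.
Proof.
move=> xy nxy ki kk kx ky.
apply: (@emb _ _ _ (fun z => match z with inl bb => if bb then x else y | inr i => k i end)).
  move=> [[]|i] [[]|j] //= e; try (by move: xy; rewrite e eqxx);
    try (by move: (kx j); rewrite -e adjxx); try (by move: (ky j); rewrite -e adjxx);
    try (by move: (kx i); rewrite e adjxx); try (by move: (ky i); rewrite e adjxx).
  by rewrite (ki _ _ e).
move=> [[]|i] [[]|j] //= ne; rewrite ?orbF ?orbT //; try (by apply/negbTE; rewrite adjC);
  try (by apply/negbTE); rewrite ?(adjC x) ?(adjC y) ?kx ?ky //.
have ij : i != j by apply: contraNneq ne => ->.
by apply/negbTE; apply: kk.
Qed.

Definition P3f (x w y : 'I_n -> T) (z : option ('I_n * 'I_3)) (b : T) : T :=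
  match z with None => b | Some (i, a) =>
    match nat_of_ord a with 0 => x i | 1 => w i | _ => y i end end.

Lemma K1P3_emb (b : T) (x w y : 'I_n -> T) :
  (forall i, adj b (x i)) -> (forall i, adj b (w i)) -> (forall i, adj b (y i)) ->
  (forall i, adj (x i) (w i)) -> (forall i, adj (w i) (y i)) ->
  (forall i, ~~ adj (x i) (y i)) -> (forall i, x i != y i) ->
  (forall i j, i != j -> forall a c, a \in [:: x i; w i; y i] -> c \in [:: x j; w j; y j] ->
     (a != c) && ~~ adj a c) ->
  induced_sub (K1joinnP3 n) G.
Proof.
move=> bx bw by' xw wy nxy dxy hac.
have hin : forall i (a : 'I_3), P3f x w y (Some (i, a)) b \in [:: x i; w i; y i].
  by move=> i [[|[|[|?]]] ?]; rewrite /= !inE eqxx ?orbT.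
have hb : forall i (a : 'I_3), adj b (P3f x w y (Some (i, a)) b).
  by move=> i [[|[|[|?]]] ?] /=.
apply: (@emb _ _ _ (fun z => P3f x w y z b)).
  move=> [[i a]|] [[j c]|] // e.
  - case: (eqVneq i j) => [eij|nij].
      subst j; congr (Some (_, _)); apply/val_inj.
      move: e; rewrite /P3f; case: a => [[|[|[|?]]] ?]; case: c => [[|[|[|?]]] ?] //= e; try lia;
        try (by move: (xw i); rewrite e adjxx); try (by move: (wy i); rewrite e adjxx);
        try (by move: (dxy i); rewrite e eqxx); try (by move: (xw i); rewrite -e adjxx);
        try (by move: (wy i); rewrite -e adjxx); try (by move: (dxy i); rewrite -e eqxx).
    by have := hac i j nij _ _ (hin i a) (hin j c); rewrite e eqxx.
  - by have := hb i a; rewrite e adjxx.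
  - by have := hb j c; rewrite -e adjxx.
move=> [[i a]|] [[j c]|] //= ne; last first.
- exact: (hb j c).
- by rewrite adjC; exact: (hb i a).
case: (eqVneq i j) => [eij|nij] /=; last first.
  by apply/negbTE; have /andP[] := hac i j nij _ _ (hin i a) (hin j c).
subst j; move: ne; case: a => [[|[|[|?]]] ?]; case: c => [[|[|[|?]]] ?] //= ne; try lia;
  rewrite ?xw ?wy //; try (by rewrite adjC ?xw ?wy);
  try (by apply/negbTE; rewrite ?nxy // adjC nxy);
  by rewrite adjxx.
Qed.

Lemma K1nstar_emb (b : T) (w p : 'I_n -> T) :
  (forall i, adj b (w i)) -> (forall i, ~~ adj b (p i)) -> (forall i, b != p i) ->
  injective w -> injective p ->
  (forall i j, i != j -> ~~ adj (w i) (w j)) -> (forall i j, i != j -> ~~ adj (p i) (p j)) ->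
  (forall i, adj (w i) (p i)) -> (forall i j, i != j -> ~~ adj (w i) (p j)) ->
  (forall i j, w i != p j) -> induced_sub (K1nstar n) G.
Proof.
move=> bw bp dbp wi pi ww pp wp wp' dwp.
apply: (@emb _ _ _ (fun z => match z with None => b | Some (i, bb) => if bb then w i else p i end)).
  case=> [[i bb]|]; case=> [[j cc]|] //=; (try case: bb); (try case: cc); move=> //= e; try (by rewrite (wi _ _ e)); try (by rewrite (pi _ _ e));
   try (by move: (dwp i j); rewrite e eqxx); try (by move: (dwp j i); rewrite e eqxx);
   try (by move: (bw i); rewrite e adjxx); try (by move: (bw j); rewrite e adjxx);
   try (by move: (dbp i); rewrite e eqxx); try (by move: (dbp j); rewrite e eqxx).
case=> [[i bb]|]; case=> [[j cc]|] //=; (try case: bb); (try case: cc); move=> //= ne; rewrite ?orbF ?orbT //=;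
  try (by rewrite bw); try (by rewrite adjC bw); try (by apply/negbTE; rewrite adjC bp);
  try (by apply/negbTE; rewrite bp).
- have ij : i != j by apply: contraNneq ne => ->.
  by apply/negbTE; apply: ww.
- case: (eqVneq i j) => [->|ij]; first by rewrite wp.
  by apply/negbTE; apply: wp'.
- case: (eqVneq j i) => [->|ij]; first by rewrite adjC wp.
  by apply/negbTE; rewrite adjC; apply: wp'.
- have ij : i != j by apply: contraNneq ne => ->.
  by apply/negbTE; apply: pp.
Qed.

Lemma Kstar_emb (c d : 'I_n -> T) : injective c -> injective d ->
  (forall i j, i != j -> adj (c i) (c j)) -> (forall i j, i != j -> ~~ adj (d i) (d j)) ->
  (forall i, adj (c i) (d i)) -> (forall i j, i != j -> ~~ adj (c i) (d j)) ->
  (forall i j, c i != d j) -> induced_sub (Kstar n) G.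
Proof.
move=> ci di cc dd cd cd' dcd.
apply: (@emb _ _ _ (fun z : 'I_n * bool => if z.2 then c z.1 else d z.1)).
  case=> [i b1] [j b2]; case: b1; case: b2 => //= e; try (by rewrite (ci _ _ e)); try (by rewrite (di _ _ e));
   try (by move: (dcd i j); rewrite e eqxx); try (by move: (dcd j i); rewrite e eqxx).
case=> [i b1] [j b2]; case: b1; case: b2 => //= ne; rewrite ?andbF ?andbT ?orbF //=.
- have ij : i != j by apply: contraNneq ne => ->.
  by rewrite cc // ij.
- case: (eqVneq i j) => [->|ij]; first by rewrite cd.
  by apply/negbTE; apply: cd'.
- case: (eqVneq i j) => [->|ij]; first by rewrite adjC cd.
  by apply/negbTE; rewrite adjC; apply: cd'; rewrite eq_sym.
- have ij : i != j by apply: contraNneq ne => ->.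
  by apply/negbTE; apply: dd.
Qed.

Lemma CK_emb (c d : 'I_n -> T) : injective c -> injective d ->
  (forall i j, i != j -> adj (c i) (c j)) -> (forall i j, i != j -> adj (d i) (d j)) ->
  (forall i, adj (c i) (d i)) -> (forall i j, i != j -> ~~ adj (c i) (d j)) ->
  (forall i j, c i != d j) -> induced_sub (CK n) G.
Proof.
move=> ci di cc dd cd cd' dcd.
apply: (@emb _ _ _ (fun z : 'I_n * bool => if z.2 then c z.1 else d z.1)).
  case=> [i b1] [j b2]; case: b1; case: b2 => //= e; try (by rewrite (ci _ _ e)); try (by rewrite (di _ _ e));
   try (by move: (dcd i j); rewrite e eqxx); try (by move: (dcd j i); rewrite e eqxx).
case=> [i b1] [j b2]; case: b1; case: b2 => //= ne; rewrite ?andbF ?andbT ?orbF //=.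
- have ij : i != j by apply: contraNneq ne => ->.
  by rewrite cc // ij.
- case: (eqVneq i j) => [->|ij]; first by rewrite cd.
  by apply/negbTE; apply: cd'.
- case: (eqVneq i j) => [->|ij]; first by rewrite adjC cd.
  by apply/negbTE; rewrite adjC; apply: cd'; rewrite eq_sym.
- have ij : i != j by apply: contraNneq ne => ->.
  by rewrite dd // ij.
Qed.
End Emb.


Section Main.
Variable G : graph.
Local Notation T := (V G).
Local Notation adj := (@adj G).
Variable n : nat.
Hypothesis Hfr : forall H, special_family n H -> ~ induced_sub H G.

Lemma noKstar : ~ induced_sub (Kstar n) G. Proof. by apply: Hfr; left. Qed.
Lemma noPath : ~ induced_sub (Path n) G. Proof. by apply: Hfr; right; left. Qed.
Lemma noK1nstar : ~ induced_sub (K1nstar n) G. Proof. by apply: Hfr; do 2 right; left. Qed.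
Lemma noK2n : ~ induced_sub (K2n n) G. Proof. by apply: Hfr; do 3 right; left. Qed.
Lemma noE2Kn : ~ induced_sub (E2joinKn n) G. Proof. by apply: Hfr; do 4 right; left. Qed.
Lemma noK1P3 : ~ induced_sub (K1joinnP3 n) G. Proof. by apply: Hfr; do 5 right; left. Qed.
Lemma noCK : ~ induced_sub (CK n) G. Proof. by apply: Hfr; do 6 right. Qed.

Lemma rS_sym (S : {set T}) : symmetric (rS S).
Proof. by move=> x y; rewrite /rS andbCA adjC. Qed.

Lemma comp_lemma (b : T) (S' : {set T}) F : (forall y, y \in S' -> adj b y) ->
  (forall C : {set T}, C \subset S' -> connS C -> #|B C| <= F) -> #|B S'| <= n * F.
Proof.
move=> bS hC.
have csym : connect_sym (rS S') by apply: sym_connect_sym; exact: rS_sym.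
pose comp w := [set y in S' | connect (rS S') w y].
have f1 : forall w, w \in S' -> w \in comp w by move=> w wS; rewrite inE wS connect0.
have f2 : forall w y x, y \in comp w -> x \in S' -> adj y x -> x \in comp w.
  move=> w y x; rewrite !inE => /andP[yS wy] xS yx; rewrite xS /=.
  by apply: connect_trans wy (connect1 _); rewrite /rS yS xS yx.
have f5 : forall w y, y \in comp w -> comp y = comp w.
  move=> w y; rewrite inE => /andP[_ wy]; apply/setP => z; rewrite !inE.
  by rewrite (same_connect csym wy).
have cS : forall w, comp w \subset S' by move=> w; apply/subsetP => y; rewrite inE => /andP[].
have f3 : forall w, connS (comp w).
  move=> w x y xc yc.
  have xy : connect (rS S') x y.
    move: xc yc; rewrite !inE => /andP[_ wx] /andP[_ wy].
    by apply: connect_trans wy; rewrite csym.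
  case/connectP: xy => p; elim: p x xc => [|a p IH] x xc /=; first by move=> _ ->; exact: connect0.
  case/andP => /and3P[xS aS xa] pp ey.
  have ac : a \in comp w by apply: f2 xc aS xa.
  apply: connect_trans (connect1 _) (IH a ac pp ey); by rewrite /rS xc ac xa.
have f4 : forall w, B S' :&: comp w \subset B (comp w).
  move=> w; apply/subsetP => v; rewrite inE => /andP[/BP[vS [x [y [xS yS vx vy hxy]]]] vc].
  by apply/BP; split=> //; exists x, y; split=> //; apply: f2 vc _ _.
pose CS := [set comp w | w in B S'].
case: (leqP n #|CS|) => hn; last first.
  have h1 : #|B S'| <= #|\bigcup_(C in CS) (C :&: B S')|.
    apply: subset_leq_card; apply/subsetP => v vB; apply/bigcupP; exists (comp v).
      by apply/imsetP; exists v.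
    by rewrite inE vB f1 //; apply: (subsetP (BS S')).
  apply: leq_trans h1 _; apply: leq_trans (card_bigcup_leq _ _) _.
  have h2 : \sum_(C in CS) #|C :&: B S'| <= \sum_(C in CS) F.
    apply: leq_sum => C /imsetP[w wB ->].
    apply: leq_trans (hC _ (cS w) (f3 w)); apply: subset_leq_card; by rewrite setIC f4.
  apply: leq_trans h2 _; rewrite sum_nat_const leq_mul2r; apply/orP; right; exact: ltnW.
exfalso; apply: noK1P3.
have [Cf [Cfi CfS]] := enum_inj hn.
pose P i (t : T * T * T) := [&& t.1.2 \in B S', Cf i == comp t.1.2, t.1.1 \in S', t.2 \in S',
   adj t.1.2 t.1.1, adj t.1.2 t.2, t.1.1 != t.2 & ~~ adj t.1.1 t.2].
pose tf i := odflt (b, b, b) [pick t | P i t].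
have Ptf : forall i, P i (tf i).
  move=> i; rewrite /tf; case: pickP => [t //|none] /=; exfalso.
  have /imsetP[w wB e] := CfS i.
  have /BP[wS [x [y [xS yS wx wy /andP[xy nxy]]]]] := wB.
  by move: (none (x, w, y)); rewrite /P /= wB e eqxx xS yS wx wy xy nxy.
have inc : forall i a, a \in [:: (tf i).1.1; (tf i).1.2; (tf i).2] -> a \in comp (tf i).1.2.
  move=> i a; have /and5P[wB _ xS yS /and4P[wx wy _ _]] := Ptf i.
  have wc : (tf i).1.2 \in comp (tf i).1.2 by apply: f1; apply: (subsetP (BS S')).
  rewrite !in_cons in_nil orbF => /or3P[] /eqP ->; [exact: f2 wc xS wx | exact: wc | exact: f2 wc yS wy].
have inS : forall i a, a \in [:: (tf i).1.1; (tf i).1.2; (tf i).2] -> a \in S'.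
  by move=> i a /(inc i)/(subsetP (cS _)).
apply: (@K1P3_emb G n b (fun i => (tf i).1.1) (fun i => (tf i).1.2) (fun i => (tf i).2)).
- by move=> i; apply: bS; apply: (inS i); rewrite !inE eqxx.
- by move=> i; apply: bS; apply: (inS i); rewrite !inE eqxx orbT.
- by move=> i; apply: bS; apply: (inS i); rewrite !inE eqxx !orbT.
- by move=> i; have /and5P[_ _ _ _ /and4P[wx _ _ _]] := Ptf i; rewrite adjC.
- by move=> i; have /and5P[_ _ _ _ /and4P[_ wy _ _]] := Ptf i.
- by move=> i; have /and5P[_ _ _ _ /and4P[_ _ _ ->]] := Ptf i.
- by move=> i; have /and5P[_ _ _ _ /and4P[_ _ -> _]] := Ptf i.
move=> i j ij a c ai cj.
have ei : Cf i = comp a.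
  have /and5P[_ /eqP -> _ _ _] := Ptf i; by rewrite (f5 _ _ (inc i a ai)).
have ej : Cf j = comp c.
  have /and5P[_ /eqP -> _ _ _] := Ptf j; by rewrite (f5 _ _ (inc j c cj)).
have ne : Cf i != Cf j by apply: contraNneq ij => /Cfi ->.
apply/andP; split.
  by apply: contraNneq ne => e; rewrite ei ej e.
apply/negP => ac; move: ne; rewrite ei ej.
have cc : c \in comp a by apply: f2 (f1 a (inS i a ai)) (inS j c cj) ac.
by rewrite (f5 _ _ cc) eqxx.
Qed.


Lemma star_contra (bt : bool) (b p0 : T) (Z : {set T}) : (forall z, z \in Z -> adj b z) ->
  n <= #|Z| -> homog adj bt Z -> p0 != b -> ~~ adj b p0 -> (forall z, z \in Z -> adj p0 z) -> False.
Proof.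
move=> bZ hn hZ pb nbp pZ; have [k [ki kZ]] := enum_inj hn.
have kk : forall i j, i != j -> adj (k i) (k j) = bt.
  by move=> i j ij; apply: hZ => //; rewrite (inj_eq ki).
case: bt hZ kk => hZ kk.
- apply: noE2Kn; apply: (@E2Kn_emb G n b p0 k) => //.
  + by rewrite eq_sym.
  + by move=> i; rewrite adjC bZ.
  + by move=> i; rewrite adjC pZ.
- apply: noK2n; apply: (@K2n_emb G n b p0 k) => //.
  + by rewrite eq_sym.
  + by move=> i j ij; rewrite kk.
  + by move=> i; rewrite adjC bZ.
  + by move=> i; rewrite adjC pZ.
Qed.

Lemma final_contra (bt gm : bool) (b : T) (U : {set T}) (pf : T -> T) : n <= #|U| ->
  homog adj bt U -> homog (fun w w' => adj (pf w) (pf w')) gm U ->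
  (forall w, w \in U -> adj b w) -> (forall w, w \in U -> ~~ adj b (pf w)) ->
  (forall w, w \in U -> pf w != b) -> (forall w, w \in U -> adj w (pf w)) ->
  {in U &, forall w w', w != w' -> ~~ adj (pf w) w'} -> False.
Proof.
move=> hn hU hP bU nbp pb wp npw.
have [k [ki kU]] := enum_inj hn.
pose d i := pf (k i).
have kne : forall i j, i != j -> k i != k j by move=> i j; rewrite (inj_eq ki).
have kk : forall i j, i != j -> adj (k i) (k j) = bt by move=> i j ij; apply: hU => //; apply: kne.
have dd : forall i j, i != j -> adj (d i) (d j) = gm by move=> i j ij; apply: hP => //; apply: kne.
have kd : forall i, adj (k i) (d i) by move=> i; apply: wp.
have kd' : forall i j, i != j -> ~~ adj (k i) (d j).
  by move=> i j ij; rewrite adjC; apply: npw => //; rewrite eq_sym kne.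
have di : injective d.
  move=> i j e; apply/eqP; apply: contraT => ij.
  have ji : j != i by rewrite eq_sym.
  by move: (kd' j i ji); rewrite e kd.
have dkd : forall i j, k i != d j.
  move=> i j; apply/eqP => e; move: (nbp (k j) (kU j)); by rewrite -/(d j) -e bU.
have bd : forall i, ~~ adj b (d i) by move=> i; apply: nbp.
have bk : forall i, adj b (k i) by move=> i; apply: bU.
have bdn : forall i, b != d i by move=> i; rewrite eq_sym; apply: pb.
case: bt hU kk => hU kk; case: gm hP dd => hP dd.
- apply: noCK; apply: (@CK_emb G n k d) => // i j ij; by rewrite ?kk ?dd.
- apply: noKstar; apply: (@Kstar_emb G n k d) => // i j ij; by rewrite ?kk ?dd.
- apply: noKstar; apply: (@Kstar_emb G n d k) => //;
    try (by move=> i j ij; rewrite ?kk ?dd); try (by move=> i; rewrite adjC);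
    try (by move=> i j ij; rewrite adjC kd' // eq_sym); by move=> i j; rewrite eq_sym.
- apply: noK1nstar; apply: (@K1nstar_emb G n b k d) => //.
  + by move=> i j ij; rewrite kk.
  + by move=> i j ij; rewrite dd.
Qed.

Lemma homog_sub (c : T -> T -> bool) bt (X Y : {set T}) : homog c bt X -> Y \subset X -> homog c bt Y.
Proof. by move=> h YX x y xY yY; apply: h; apply: (subsetP YX). Qed.

Lemma min_in (Y : {set T}) (f : T -> nat) w0 : w0 \in Y ->
  exists2 w, w \in Y & forall w', w' \in Y -> f w <= f w'.
Proof. by move=> w0Y; case: (@arg_minnP T w0 (fun w => w \in Y) f w0Y) => w wY h; exists w. Qed.

Lemma max_in (Y : {set T}) (f : T -> nat) w0 : w0 \in Y ->
  exists2 w, w \in Y & forall w', w' \in Y -> f w' <= f w.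
Proof. by move=> w0Y; case: (@arg_maxnP T w0 (fun w => w \in Y) f w0Y) => w wY h; exists w. Qed.

End Main.

Lemma mid n : exists N1, forall (G : graph), (forall H, special_family n H -> ~ induced_sub H G) ->
  forall (bt : bool) (b : V G) (X : {set V G}) (pf : V G -> V G), N1 <= #|X| ->
  homog (@adj G) bt X -> (forall w, w \in X -> adj b w) -> (forall w, w \in X -> ~~ adj b (pf w)) ->
  (forall w, w \in X -> pf w != b) -> (forall w, w \in X -> adj w (pf w)) -> False.
Proof.
have [N3 R3] := ramseyN n n; have [N2 R2] := ramseyN n.+1 N3; have [N1 R1] := ramseyN n.+1 N2.
exists N1 => G Hfr bt b X pf hX hom bX nbp pb wp.
pose rk (w : V G) := nat_of_ord (enum_rank w).
have rk_inj : forall w w', rk w = rk w' -> w = w'.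
  by move=> w w' e; apply: enum_rank_inj; apply: val_inj.
pose c1 w w' := if rk w < rk w' then adj (pf w) w' else adj (pf w') w.
pose c2 w w' := if rk w < rk w' then adj (pf w') w else adj (pf w) w'.
have c1s : forall w w', c1 w w' = c1 w' w.
  by move=> w w'; rewrite /c1; case: ltngtP => // /rk_inj ->.
have c2s : forall w w', c2 w w' = c2 w' w.
  by move=> w w'; rewrite /c2; case: ltngtP => // /rk_inj ->.
have rklt : forall (Y : {set V G}) w0 w, w0 \in Y -> w \in Y -> w != w0 ->
  (forall w', w' \in Y -> rk w0 <= rk w') -> rk w0 < rk w.
  move=> Y w0 w w0Y wY ne hm; rewrite ltn_neqAle hm // andbT.
  by apply: contraNneq ne => /rk_inj ->.
have card1 : forall (Y : {set V G}) w0, w0 \in Y -> n.+1 <= #|Y| -> n <= #|Y :\ w0|.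
  by move=> Y w0 w0Y h; rewrite (cardsD1 w0 Y) w0Y in h.
case: (R1 _ X c1 c1s hX) => [[Y [YX hY homY]]|[Y [YX hY homY]]].
  have [w00 w00Y] : exists w, w \in Y.
    by apply/card_gt0P; apply: leq_trans hY.
  have [w0 w0Y hm] := min_in rk w00Y.
  have w0X : w0 \in X by apply: (subsetP YX).
  apply: (@star_contra G n Hfr bt b (pf w0) (Y :\ w0)).
  - by move=> z; rewrite !inE => /andP[_ /(subsetP YX)]; apply: bX.
  - exact: card1.
  - by apply: homog_sub hom _; apply: subset_trans YX; apply: subsetDl.
  - exact: pb.
  - exact: nbp.
  - move=> z; rewrite !inE => /andP[zne zY].
    have := homY w0 z w0Y zY; rewrite eq_sym zne => /(_ isT).
    by rewrite /c1 (rklt Y w0 z).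
case: (R2 _ Y c2 c2s hY) => [[Z [ZY hZ homZ]]|[Z [ZY hZ homZ]]].
  have [w00 w00Z] : exists w, w \in Z.
    by apply/card_gt0P; apply: leq_trans hZ.
  have [w1 w1Z hm] := max_in rk w00Z.
  have ZX : Z \subset X by apply: subset_trans ZY YX.
  have w1X : w1 \in X by apply: (subsetP ZX).
  apply: (@star_contra G n Hfr bt b (pf w1) (Z :\ w1)).
  - by move=> z; rewrite !inE => /andP[_ /(subsetP ZX)]; apply: bX.
  - exact: card1.
  - by apply: homog_sub hom _; apply: subset_trans ZX; apply: subsetDl.
  - exact: pb.
  - exact: nbp.
  - move=> z; rewrite !inE => /andP[zne zZ].
    have := homZ z w1 zZ w1Z zne; rewrite /c2.
    have -> : rk z < rk w1 by rewrite ltn_neqAle hm // andbT; apply: contraNneq zne => /rk_inj ->.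
    by [].
pose c3 w w' := adj (pf w) (pf w').
have c3s : forall w w', c3 w w' = c3 w' w by move=> w w'; rewrite /c3 adjC.
have ZX : Z \subset X by apply: subset_trans ZY YX.
have [gm [U [UZ hU homU]]] : exists gm, exists U : {set V G}, [/\ U \subset Z, n <= #|U| & homog c3 gm U].
  case: (R3 _ Z c3 c3s hZ) => [[U [? ? ?]]|[U [? ? ?]]]; by [exists true, U | exists false, U].
have UY : U \subset Y by apply: subset_trans UZ ZY.
have UX : U \subset X by apply: subset_trans UZ ZX.
apply: (@final_contra G n Hfr bt gm b U pf) => //.
- by apply: homog_sub hom UX.
- by move=> w /(subsetP UX); apply: bX.
- by move=> w /(subsetP UX); apply: nbp.
- by move=> w /(subsetP UX); apply: pb.
- by move=> w /(subsetP UX); apply: wp.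
move=> w w' wU w'U ne; apply/negbT.
case: (ltngtP (rk w) (rk w')) => h.
- have := homY w w' (subsetP UY w wU) (subsetP UY w' w'U) ne; by rewrite /c1 h.
- have := homZ w' w (subsetP UZ w' w'U) (subsetP UZ w wU); rewrite eq_sym => /(_ ne).
  by rewrite /c2 h.
- by move: ne; rewrite (rk_inj _ _ h) eqxx.
Qed.

Definition good (G : graph) (K S : {set V G}) :=
  [/\ connS S, {in K &, forall x y, x != y -> adj x y} & {in K & S, forall x y, adj x y}].

Lemma main n m : exists f, forall (G : graph), (forall H, special_family n H -> ~ induced_sub H G) ->
  forall K S : {set V G}, n <= #|K| + m -> good K S -> #|B S| < f.
Proof.
elim: m => [|m [F IH]].
  exists 1 => G Hfr K S hK [cS Kc KS]; rewrite ltnS leqn0 cards_eq0; apply/eqP/setP => v.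
  rewrite in_set0; apply/negbTE/negP => /BP[vS [x [y [xS yS vx vy /andP[xy nxy]]]]].
  rewrite addn0 in hK; have [k [ki kK]] := enum_inj hK.
  apply: (noE2Kn Hfr); apply: (@E2Kn_emb G n x y k) => //.
  + by move=> i j ij; apply: Kc; rewrite ?kK // (inj_eq ki).
  + by move=> i; apply: KS.
  + by move=> i; apply: KS.
have [N1 hmid] := mid n.
have [N0 R0] := ramseyN N1 N1.
pose D := N0 + n * F.
exists (D.+1 ^ n).+1 => G Hfr K S hK [cS Kc KS]; rewrite ltnS.
case: (boolP [forall x in B S, #|[set y in B S | adj x y]| <= D]) => [/forall_inP hall|].
  exact: (B_bound (noPath Hfr) cS hall).
rewrite negb_forall_in => /exists_inP[b bB]; rewrite -ltnNge => hb.
have bS : b \in S by move/BP: bB => [].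
have bK : b \notin K by apply/negP => bK; move: (KS b b bK bS); rewrite adjxx.
pose S' : {set V G} := [set y in S | adj b y].
have hS' : #|B S'| <= n * F.
  apply: (@comp_lemma G n Hfr b) => [y|C CS' cC]; first by rewrite inE => /andP[].
  apply: ltnW; apply: (IH G Hfr (b |: K) C).
    by rewrite cardsU1 bK /=; move: hK; rewrite addnS add1n.
  split=> //.
  - move=> x y; rewrite !inE => /orP[/eqP->|xK] /orP[/eqP->|yK]; rewrite ?eqxx // => ne.
    + by rewrite adjC; apply: KS.
    + by apply: KS.
    + by apply: Kc.
  - move=> x y xK yC; have := subsetP CS' y yC; rewrite inE => /andP[yS by'].
    by move: xK; rewrite !inE => /orP[/eqP->//|xK]; apply: KS.
pose W := [set y in B S | adj b y] :\: B S'.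
have hW : N0 <= #|W|.
  have : #|[set y in B S | adj b y]| <= #|W| + #|B S'|.
    apply: leq_trans (leq_card_setU _ _).1; apply: subset_leq_card; apply/subsetP => y yB.
    by rewrite in_setU in_setD yB andbT orNb.
  by move: hb; rewrite /D; lia.
pose P w p := [&& p \in S, adj w p, p != b & ~~ adj b p].
pose pf w := odflt b [pick p | P w p].
have Ppf : forall w, w \in W -> P w (pf w).
  move=> w; rewrite in_setD in_set => /andP[wS' /andP[wB bw]].
  rewrite /pf; case: pickP => [p //|none]; exfalso.
  move/BP: (wB) => [wS [x [y [xS yS wx wy /andP[xy nxy]]]]].
  have hx : (x == b) || adj b x.
    by move: (none x); rewrite /P xS wx /=; case: eqP => //=; case: adj.
  have hy : (y == b) || adj b y.
    by move: (none y); rewrite /P yS wy /=; case: eqP => //=; case: adj.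
  case/orP: hx => [/eqP ex|bx].
    case/orP: hy => [/eqP ey|by']; first by move: xy; rewrite ex ey eqxx.
    by move: nxy; rewrite ex by'.
  case/orP: hy => [/eqP ey|by']; first by move: nxy; rewrite ey adjC bx.
  move/negP: wS'; apply; apply/BP; split; first by rewrite inE wS bw.
  by exists x, y; split; rewrite ?inE ?xS ?yS ?bx ?by' ?xy.
have WX : forall X : {set V G}, X \subset W -> forall w, w \in X -> P w (pf w) && adj b w.
  move=> X XW w wX; have wW := subsetP XW w wX; rewrite Ppf //.
  by move: wW; rewrite in_setD in_set => /andP[_ /andP[]].
exfalso; case: (R0 _ W (@adj G) (@adjC G) hW) => [[X [XW hX homX]]|[X [XW hX homX]]];
  apply: (hmid G Hfr _ b X pf hX homX) => w wX; have /andP[/and4P[pS wp pb nbp] bw] := WX X XW w wX => //.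
Qed.



Lemma induced_trans (H1 H2 H3 : graph) : induced_sub H1 H2 -> induced_sub H2 H3 -> induced_sub H1 H3.
Proof.
move=> [f [fi hf]] [g [gi hg]]; exists (g \o f); split; first exact: inj_comp.
by move=> x y; rewrite hf hg.
Qed.

Lemma alpha_B (G : graph) (v : V G) : 2 <= local_alpha v -> v \in B [set: V G].
Proof.
move=> h; apply/BP; split=> //; apply: NNPP => hn.
have : local_alpha v <= 1.
  apply/bigmax_leqP => A /andP[AN /forallP iA]; rewrite leqNgt; apply/negP.
  case/card_gt1P => x [y [xA yA xy]]; apply: hn; exists x, y; split=> //.
  - by move: (subsetP AN x xA); rewrite inE.
  - by move: (subsetP AN y yA); rewrite inE.
  - by rewrite xy /=; move: (iA x); rewrite xA /= => /forall_inP/(_ y yA).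
by rewrite leqNgt (leq_trans _ h).
Qed.

Lemma alpha2 (G : graph) (v x y : V G) : adj v x -> adj v y -> x != y -> ~~ adj x y -> 2 <= local_alpha v.
Proof.
move=> vx vy xy nxy; rewrite /local_alpha /alpha_in.
have -> : 2 = #|[set x; y]| by rewrite cards2 xy.
apply: (@leq_bigmax_cond _ (fun A : {set V G} => (A \subset nbhd v) && independent A) (fun A => #|A|)); apply/andP; split.
  by apply/subsetP => z; rewrite !inE => /orP[] /eqP ->.
apply/forall_inP => a aA; apply/forall_inP => b bA.
move: aA bA; rewrite !inE => /orP[] /eqP -> /orP[] /eqP ->; rewrite ?adj_irr //.
by rewrite adj_sym.
Qed.

Lemma ii_i (HH : graph -> Prop) n : family_le HH (special_family n) ->
  exists c : nat, forall G : graph, connected G -> Hfree HH G ->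
      #|[set v : V G | 2 <= local_alpha v]| < c.
Proof.
move=> hle.
have [f hf] := main n n.
exists f => G cG hG.
have Hfr : forall H, special_family n H -> ~ induced_sub H G.
  move=> H sH iH; have [H1 h1 i1] := hle H sH; exact: hG H1 h1 (induced_trans i1 iH).
apply: leq_ltn_trans (hf G Hfr set0 [set: V G] _ _).
- by apply: subset_leq_card; apply/subsetP => v; rewrite inE; apply: alpha_B.
- by rewrite cards0.
- split.
  + move=> x y _ _; rewrite (@eq_connect _ _ (@adj G)) //; by move=> a b; rewrite /rS !inE.
  + by move=> x; rewrite inE.
  + by move=> x; rewrite inE.
Qed.


Lemma sadjE (T : finType) (r : rel T) x y : @adj (sgraph r) x y = (x != y) && (r x y || r y x).
Proof. by []. Qed.

Lemma hub_conn (H : graph) (h : V H) : (forall x, connect (@adj H) x h) -> connected H.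
Proof.
move=> hx x y; apply: connect_trans (hx x) _.
by rewrite (sym_connect_sym (@adj_sym H)).
Qed.

Lemma count_lb (H : graph) k (f : 'I_k -> V H) : injective f -> (forall i, 2 <= local_alpha (f i)) ->
  k <= #|[set v : V H | 2 <= local_alpha v]|.
Proof.
move=> fi hf; have <- : #|f @: [set: 'I_k]| = k by rewrite card_imset // cardsT card_ord.
apply: subset_leq_card; apply/subsetP => v /imsetP[i _ ->]; by rewrite inE.
Qed.

Lemma pneq2 (A B : eqType) (a a' : A) (b b' : B) : b != b' -> (a, b) != (a', b').
Proof. by apply: contraNneq => -[_ ->]. Qed.
Lemma pneq1 (A B : eqType) (a a' : A) (b b' : B) : a != a' -> (a, b) != (a', b').
Proof. by apply: contraNneq => -[->]. Qed.

Section Sp.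
Variable c : nat.
Local Notation N := c.+2.
Let o0 : 'I_N := ord0.
Let oM : 'I_N := ord_max.
Lemma o0M : o0 != oM. Proof. by []. Qed.
Definition other (i : 'I_N) : 'I_N := if i == o0 then oM else o0.
Lemma other_neq i : i != other i.
Proof. by rewrite /other; case: (eqVneq i o0) => [->|]. Qed.

Lemma Kstar_ok : connected (Kstar N) /\ c <= #|[set v : V (Kstar N) | 2 <= local_alpha v]|.
Proof.
split.
  apply: (@hub_conn (Kstar N) (o0, true)) => -[i b].
  have h1 : connect (@adj (Kstar N)) (i, b) (i, true).
    case: b; first exact: connect0.
    by apply: connect1; rewrite sadjE /= pneq2 // eqxx.
  apply: connect_trans h1 _; case: (eqVneq i o0) => [->|ne]; first exact: connect0.
  by apply: connect1; rewrite sadjE /= pneq1 // ne.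
apply: leq_trans (leqnSn _) _; apply: leq_trans (leqnSn _) _.
apply: (@count_lb (Kstar N) N (fun i => (i, true))); first by move=> i j [].
move=> i; apply: (@alpha2 (Kstar N) (i, true) (i, false) (other i, true)).
- by rewrite sadjE /= pneq2 // eqxx.
- by rewrite sadjE /= pneq1 ?other_neq.
- by rewrite pneq2.
- apply/negP => /andP[_ /orP[] /eqP /= e]; move: (other_neq i); [by rewrite {1}e eqxx | by rewrite e eqxx].
Qed.

Lemma Path_ok : connected (Path N) /\ c <= #|[set v : V (Path N) | 2 <= local_alpha v]|.
Proof.
split.
  apply: (@hub_conn (Path N) o0).
  suff : forall k (x : 'I_N), val x = k -> connect (@adj (Path N)) x o0 by move=> h x; exact: h.
  elim=> [|k IH] x hx; first by rewrite (_ : x = o0) ?connect0 //; apply: val_inj.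
  have kN : k < N by move: (ltn_ord x); rewrite hx; lia.
  apply: connect_trans (connect1 _) (IH (Ordinal kN) erefl).
  rewrite sadjE /= hx eqxx orbT andbT; apply/eqP => /(congr1 (@nat_of_ord _)) /=; rewrite hx; lia.
pose f (i : 'I_c) : 'I_N := inord i.+1.
have fv : forall i : 'I_c, nat_of_ord (f i) = i.+1 by move=> i; rewrite /f inordK //; move: (ltn_ord i); lia.
apply: (@count_lb (Path N) c f).
  by move=> i j /(congr1 (@nat_of_ord _)); rewrite !fv => -[] /val_inj.
move=> i; have hi := ltn_ord i.
have e0 : nat_of_ord (inord i : 'I_N) = i by rewrite inordK //; lia.
have e2 : nat_of_ord (inord i.+2 : 'I_N) = i.+2 by rewrite inordK //; lia.
apply: (@alpha2 (Path N) (f i) (inord i) (inord i.+2)).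
- rewrite sadjE /= fv e0 eqxx orbT andbT; apply/eqP => /(congr1 (@nat_of_ord _)); rewrite fv e0; lia.
- rewrite sadjE /= fv e2 eqxx andbT; apply/eqP => /(congr1 (@nat_of_ord _)); rewrite fv e2; lia.
- apply/eqP => /(congr1 (@nat_of_ord _)); rewrite e0 e2; lia.
- rewrite sadjE /= e0 e2; apply/negP => /andP[_ /orP[] /eqP]; lia.
Qed.

Lemma K1nstar_ok : connected (K1nstar N) /\ c <= #|[set v : V (K1nstar N) | 2 <= local_alpha v]|.
Proof.
split.
  apply: (@hub_conn (K1nstar N) None) => -[[i []]|]; last exact: connect0.
    by apply: connect1.
  apply: connect_trans (connect1 (_ : @adj (K1nstar N) _ (Some (i, true)))) (connect1 _) => //.
  by rewrite sadjE /= pneq2 //= eqxx orbT.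
apply: leq_trans (leqnSn _) _; apply: leq_trans (leqnSn _) _.
apply: (@count_lb (K1nstar N) N (fun i => Some (i, true))); first by move=> i j [].
move=> i; apply: (@alpha2 (K1nstar N) (Some (i, true)) None (Some (i, false))) => //.
by rewrite sadjE /= eqxx andbT; apply/eqP => -[].
Qed.

Lemma K2n_ok : connected (K2n N) /\ c <= #|[set v : V (K2n N) | 2 <= local_alpha v]|.
Proof.
split.
  apply: (@hub_conn (K2n N) (inl true)) => -[[]|i]; first exact: connect0; last exact: connect1.
  by apply: connect_trans (connect1 (_ : @adj (K2n N) _ (inr o0))) (connect1 _).
apply: leq_trans (leqnSn _) _; apply: leq_trans (leqnSn _) _.
apply: (@count_lb (K2n N) N (fun i => inr i)); first by move=> i j [].
by move=> i; apply: (@alpha2 (K2n N) (inr i) (inl true) (inl false)).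
Qed.

Lemma E2joinKn_ok : connected (E2joinKn N) /\ c <= #|[set v : V (E2joinKn N) | 2 <= local_alpha v]|.
Proof.
split.
  apply: (@hub_conn (E2joinKn N) (inl true)) => -[[]|i]; first exact: connect0; last exact: connect1.
  by apply: connect_trans (connect1 (_ : @adj (E2joinKn N) _ (inr o0))) (connect1 _).
apply: leq_trans (leqnSn _) _; apply: leq_trans (leqnSn _) _.
apply: (@count_lb (E2joinKn N) N (fun i => inr i)); first by move=> i j [].
by move=> i; apply: (@alpha2 (E2joinKn N) (inr i) (inl true) (inl false)).
Qed.

Lemma K1joinnP3_ok : connected (K1joinnP3 N) /\ c <= #|[set v : V (K1joinnP3 N) | 2 <= local_alpha v]|.
Proof.
split.
  apply: (@hub_conn (K1joinnP3 N) None) => -[[i a]|]; last exact: connect0.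
  by apply: connect1.
apply: leq_trans (leqnSn _) _; apply: leq_trans (leqnSn _) _.
pose a0 : 'I_3 := Ordinal (isT : 0 < 3).
pose a1 : 'I_3 := Ordinal (isT : 1 < 3).
pose a2 : 'I_3 := Ordinal (isT : 2 < 3).
apply: (@count_lb (K1joinnP3 N) N (fun i => Some (i, a1))); first by move=> i j [].
move=> i; apply: (@alpha2 (K1joinnP3 N) (Some (i, a1)) (Some (i, a0)) (Some (i, a2))).
- by rewrite sadjE /= eqxx /= ?orbT ?andbT; apply/eqP => -[].
- by rewrite sadjE /= eqxx /= ?orbT ?andbT; apply/eqP => -[].
- by apply/eqP => -[].
- by rewrite sadjE /= !andbF.
Qed.

Lemma CK_ok : connected (CK N) /\ c <= #|[set v : V (CK N) | 2 <= local_alpha v]|.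
Proof.
split.
  apply: (@hub_conn (CK N) (o0, true)) => -[i b].
  have h1 : connect (@adj (CK N)) (i, b) (i, true).
    case: b; first exact: connect0.
    by apply: connect1; rewrite sadjE /= pneq2 // eqxx.
  apply: connect_trans h1 _; case: (eqVneq i o0) => [->|ne]; first exact: connect0.
  by apply: connect1; rewrite sadjE /= pneq1 // ne.
apply: leq_trans (leqnSn _) _; apply: leq_trans (leqnSn _) _.
apply: (@count_lb (CK N) N (fun i => (i, true))); first by move=> i j [].
move=> i; apply: (@alpha2 (CK N) (i, true) (i, false) (other i, true)).
- by rewrite sadjE /= pneq2 // eqxx.
- by rewrite sadjE /= pneq1 ?other_neq.
- by rewrite pneq2.
- apply/negP => /andP[_ /orP[] /orP[] /andP[] //= _ /eqP /= e];
    move: (other_neq i); [by rewrite {1}e eqxx | by rewrite e eqxx].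
Qed.
End Sp.


Theorem theorem1p5 (HH : graph -> Prop) :
  (exists c : nat, forall G : graph, connected G -> Hfree HH G ->
      #|[set v : V G | 2 <= local_alpha v]| < c)
  <->
  (exists n : nat, 0 < n /\ family_le HH (special_family n)).
Proof.
split; last by case=> n [_ hle]; exact: ii_i hle.
case=> c hc; exists c.+2; split=> // H2 sH2.
apply: NNPP => hno.
have hfree : Hfree HH H2 by move=> H hH hi; apply: hno; exists H.
have [cn cnt] : connected H2 /\ c <= #|[set v : V H2 | 2 <= local_alpha v]|.
  case: sH2 => [->|[->|[->|[->|[->|[->|->]]]]]].
  - exact: Kstar_ok.
  - exact: Path_ok.
  - exact: K1nstar_ok.
  - exact: K2n_ok.
  - exact: E2joinKn_ok.
  - exact: K1joinnP3_ok.
  - exact: CK_ok.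
by have := hc H2 cn hfree; rewrite ltnNge cnt.
Qed.
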